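(* 1) For each odd $n\ge3$ there exists a binary Euclidean almost self-dual $[2n,n,\min\{4,n\}]_2$ code; in particular, for each odd $n\ge5$ there exists a binary Euclidean almost self-dual $[2n,n,4]_2$ code. 2) For each even $n\ge2$ there exists a binary Euclidean self-dual $[2n,n,\min\{4,n\}]_2$ code; in particular, for each even $n\ge4$ there exists a binary Euclidean self-dual $[2n,n,4]_2$ code.
   Context: For a binary linear $[n,k,d]_2$ code $\mathcal{C}$, $\mathrm{Hull}_E(\mathcal{C})=\mathcal{C}\cap\mathcal{C}^{\perp_E}$ with $\perp_E$ the dual under $\sum_ix_iy_i$. $\mathcal{C}$ is Euclidean self-dual if $\mathcal{C}=\mathcal{C}^{\perp_E}$. $\mathcal{C}$ is almost Euclidean self-orthogonal if $\dim(\mathrm{Hull}_E(\mathcal{C}))=k-1$, and almost Euclidean self-dual if it is almost Euclidean self-orthogonal and $n=2k$. *)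

(* Defs.v *)
(* Binary linear codes of length n are represented by a
   square matrix C : 'M['F_2]_n whose row space is the code. *)
From HB Require Import structures.
From mathcomp Require Import all_boot all_order all_algebra.
Set Implicit Arguments. Unset Strict Implicit. Unset Printing Implicit Defensive.
Import GRing.Theory.
Local Open Scope ring_scope.

Definition wt n (u : 'rV['F_2]_n) : nat := #|[set i : 'I_n | u 0 i != 0]|.

Definition dualE n (C : 'M['F_2]_n) : 'M['F_2]_n := kermx C^T.

Definition hullE n (C : 'M['F_2]_n) : 'M['F_2]_n := (C :&: dualE C)%MS.

Definition is_code n k d (C : 'M['F_2]_n) : Prop :=
  \rank C = k /\
  (exists u : 'rV['F_2]_n, (u <= C)%MS /\ u != 0 /\ wt u = d) /\
  (forall u : 'rV['F_2]_n, (u <= C)%MS -> u != 0 -> (d <= wt u)%N).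

Definition self_dualE n (C : 'M['F_2]_n) : Prop := (C == dualE C)%MS.

(* dim Hull = k - 1 (stated as dim Hull + 1 = k to avoid truncated subtraction). *)
Definition almost_self_orthogonalE n (C : 'M['F_2]_n) : Prop :=
  (\rank (hullE C)).+1 = \rank C.

Definition almost_self_dualE n (C : 'M['F_2]_n) : Prop :=
  almost_self_orthogonalE C /\ n = (2 * \rank C)%N.

(* Main.v *)
Require Import Defs.
From mathcomp Require Import all_boot all_order all_algebra zify.
Set Implicit Arguments. Unset Strict Implicit. Unset Printing Implicit Defensive.
Import GRing.Theory.
Local Open Scope ring_scope.

Lemma F2_cases (x : 'F_2) : x = 0 \/ x = 1.
Proof. case: x => [[|[|//]]] Hx; [left|right]; exact/val_inj. Qed.

Lemma F2_add_self (x : 'F_2) : x + x = 0.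
Proof. by case: (F2_cases x) => [->|->]; apply/eqP. Qed.

Lemma F2_opp (x : 'F_2) : - x = x.
Proof. by case: (F2_cases x) => [->|->]; apply/eqP. Qed.

Lemma F2_nat k : (k%:R : 'F_2) = (odd k)%:R.
Proof. elim: k => // k IH; rewrite mulrS IH /=; by case: (odd k); apply/eqP. Qed.

Lemma F2_id (a b : 'F_2) : a + (b - 1 - 1 + a) = b.
Proof. by case: (F2_cases a) => [->|->]; case: (F2_cases b) => [->|->]; apply/eqP. Qed.

Lemma F2_nat_b (x : 'F_2) : x = (x != 0)%:R.
Proof. by case: (F2_cases x) => [->|->]; apply/eqP. Qed.

Lemma wtE n (u : 'rV['F_2]_n) : wt u = (\sum_i (u 0%R i != 0%R))%N.
Proof.
rewrite /wt -sum1_card big_mkcond /=; apply: eq_bigr => i _; by rewrite inE; case: (_ != _).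
Qed.

Lemma wt_row_mx n1 n2 (a : 'rV['F_2]_n1) (b : 'rV['F_2]_n2) :
  wt (row_mx a b) = (wt a + wt b)%N.
Proof.
by rewrite !wtE big_split_ord /=; congr (_ + _)%N; apply: eq_bigr => i _;
  rewrite ?row_mxEl ?row_mxEr.
Qed.

Lemma sum_wt n (w : 'rV['F_2]_n) : \sum_i w 0 i = (odd (wt w))%:R.
Proof.
rewrite -F2_nat wtE natr_sum; apply: eq_bigr => i _; exact: F2_nat_b.
Qed.

Definition Amx n : 'M['F_2]_n := const_mx 1 - 1%:M.
Definition Gmx n : 'M['F_2]_(n, n + n) := row_mx 1%:M (Amx n).
Definition Cmx n : 'M['F_2]_(n + n) := col_mx (Gmx n) 0.

Lemma mulA_entry n (w : 'rV['F_2]_n) j : (w *m Amx n) 0 j = \sum_i w 0 i - w 0 j.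
Proof.
rewrite /Amx mulmxBr mulmx1 !mxE; congr (_ - _); apply: eq_bigr => i _.
by rewrite mxE mulr1.
Qed.

Lemma wt_mulA n (w : 'rV['F_2]_n) :
  wt (w *m Amx n) = if odd (wt w) then (n - wt w)%N else wt w.
Proof.
case: ifP => Hodd.
  have -> : wt (w *m Amx n) = #|~: [set i | w 0 i != 0]|.
    rewrite /wt; apply: eq_card => i; rewrite !inE mulA_entry sum_wt Hodd /=.
    by case: (F2_cases (w 0 i)) => ->.
  by apply/eqP; rewrite -(eqn_add2l (wt w)) subnKC ?cardsC ?card_ord //; rewrite /wt -[X in (_ <= X)%N](card_ord n); exact: max_card.
rewrite /wt; apply: eq_card => i; rewrite !inE mulA_entry sum_wt Hodd /=.
by case: (F2_cases (w 0 i)) => ->.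
Qed.

Lemma Cmx_mem n (u : 'rV['F_2]_(n + n)) :
  (u <= Cmx n)%MS -> exists w, u = row_mx w (w *m Amx n).
Proof.
case/submxP => D ->; exists (lsubmx D).
by rewrite -[D]hsubmxK /Cmx mul_row_col mulmx0 addr0 /Gmx mul_mx_row mulmx1 row_mxKl.
Qed.

Lemma Cmx_memW n (w : 'rV['F_2]_n) : (row_mx w (w *m Amx n) <= Cmx n)%MS.
Proof.
have -> : row_mx w (w *m Amx n) = row_mx w 0 *m Cmx n.
  by rewrite /Cmx mul_row_col mulmx0 addr0 /Gmx mul_mx_row mulmx1.
exact: submxMl.
Qed.

Lemma rank_col0 m1 m2 n (X : 'M['F_2]_(m1, n)) :
  \rank (col_mx X (0 : 'M_(m2, n))) = \rank X.
Proof. exact: (eqmx_trans (eqmx_sym (addsmxE X 0)) (addsmx0 _ X)).1. Qed.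

Lemma rank_row0 m n1 n2 (X : 'M['F_2]_(m, n1)) :
  \rank (row_mx X (0 : 'M_(m, n2))) = \rank X.
Proof. by rewrite -mxrank_tr tr_row_mx trmx0 rank_col0 mxrank_tr. Qed.

Lemma rank_G n : \rank (Gmx n) = n.
Proof.
apply/eqP; rewrite eqn_leq rank_leq_row /=.
have H : Gmx n *m col_mx 1%:M (0 : 'M_(n, n)) = 1%:M.
  by rewrite /Gmx mul_row_col mulmx0 addr0 mulmx1.
by have := mxrankM_maxl (Gmx n) (col_mx 1%:M 0); rewrite H mxrank1.
Qed.

Lemma rank_C n : \rank (Cmx n) = n.
Proof. by rewrite /Cmx rank_col0 rank_G. Qed.

Lemma GGt n : Gmx n *m (Gmx n)^T = const_mx (n%:R).
Proof.
have JJ : (const_mx 1 : 'M['F_2]_n) *m (const_mx 1 : 'M['F_2]_n) = const_mx n%:R.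
  apply/matrixP => i j; rewrite !mxE (eq_bigr (fun _ => 1)) ?sumr_const ?card_ord //.
  by move=> k _; rewrite !mxE mulr1.
rewrite /Gmx tr_row_mx mul_row_col trmx1 mulmx1 /Amx linearB /= trmx_const trmx1.
rewrite mulmxBl !mulmxBr !mulmx1 mul1mx JJ.
apply/matrixP => i j; rewrite !mxE F2_nat.
by case: (odd n); case: (i == j); apply/eqP.
Qed.

Lemma CCt n : Cmx n *m (Cmx n)^T = col_mx (row_mx (const_mx n%:R) 0) 0.
Proof.
by rewrite /Cmx tr_col_mx trmx0 mul_col_mx mul0mx mul_mx_row mulmx0 GGt.
Qed.

Lemma rank_J n : (0 < n)%N -> \rank (const_mx 1 : 'M['F_2]_n) = 1%N.
Proof.
move=> Hn; apply/eqP; rewrite eqn_leq; apply/andP; split.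
  have -> : (const_mx 1 : 'M['F_2]_n) = (const_mx 1 : 'cV_n) *m (const_mx 1 : 'rV_n).
    by apply/matrixP => i j; rewrite !mxE big_ord1 !mxE mulr1.
  exact: leq_trans (mxrankM_maxr _ _) (rank_leq_row _).
rewrite lt0n mxrank_eq0; apply/eqP => /matrixP /(_ (Ordinal Hn) (Ordinal Hn)).
by rewrite !mxE.
Qed.

Lemma wt_eq0 n (u : 'rV['F_2]_n) : (wt u == 0%N) = (u == 0).
Proof.
rewrite /wt cards_eq0; apply/idP/idP => [/eqP H|/eqP ->].
  apply/eqP/matrixP => i j; rewrite ord1 mxE.
  apply/eqP; apply: contraT => Hj.
  by move/setP: H => /(_ j); rewrite !inE Hj.
by apply/eqP/setP => i; rewrite !inE mxE eqxx.
Qed.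

Lemma wt_le n (u : 'rV['F_2]_n) : (wt u <= n)%N.
Proof. by rewrite /wt -[X in (_ <= X)%N](card_ord n); exact: max_card. Qed.

Lemma wt_delta1 n (i : 'I_n) : wt (delta_mx 0 i : 'rV['F_2]_n) = 1%N.
Proof.
rewrite /wt (_ : [set j | _] = [set i]) ?cards1 //; apply/setP => j.
rewrite !inE mxE eqxx /=; by case: (j == i).
Qed.

Lemma wt_delta2 n (i k : 'I_n) : i != k ->
  wt (delta_mx 0 i + delta_mx 0 k : 'rV['F_2]_n) = 2%N.
Proof.
move=> Hik; rewrite /wt (_ : [set j | _] = [set i; k]) ?cards2 ?Hik //.
apply/setP => j; rewrite !inE !mxE eqxx /=.
case: (eqVneq j i) => [->|Hji]; first by rewrite (negbTE Hik).
by case: (j == k).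
Qed.

Lemma Cmx_code n : (2 <= n)%N -> is_code n (minn 4 n) (Cmx n).
Proof.
move=> Hn; split; first exact: rank_C.
split.
  case: (leqP 4 n) => H4.
    have Hik : Ordinal (ltnW (ltnW H4)) != Ordinal (ltnW H4) :> 'I_n by [].
    set w := (delta_mx 0 (Ordinal (ltnW (ltnW H4))) + delta_mx 0 (Ordinal (ltnW H4)) : 'rV['F_2]_n).
    have Hw : wt w = 2%N by exact: wt_delta2.
    exists (row_mx w (w *m Amx n)); split; first exact: Cmx_memW.
    have Hu : wt (row_mx w (w *m Amx n)) = 4%N by rewrite wt_row_mx wt_mulA Hw.
    split; last by rewrite Hu; lia.
    by rewrite -wt_eq0 Hu.
  set w := (delta_mx 0 (Ordinal (ltnW Hn)) : 'rV['F_2]_n).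
  have Hw : wt w = 1%N by exact: wt_delta1.
  exists (row_mx w (w *m Amx n)); split; first exact: Cmx_memW.
  have Hu : wt (row_mx w (w *m Amx n)) = n by rewrite wt_row_mx wt_mulA Hw /=; lia.
  split; last by rewrite Hu; lia.
  by rewrite -wt_eq0 Hu; lia.
move=> u /Cmx_mem [w ->] Hu.
have Hw : w != 0 by apply: contraNneq Hu => ->; rewrite mul0mx row_mx0.
have := wt_le w; rewrite -wt_eq0 in Hw.
rewrite wt_row_mx wt_mulA; case: ifP => Ho Hle.
  lia.
move: Ho Hw; case: (wt w) => [|[|k]] //= _ _; lia.
Qed.

Lemma hull_rank n : odd n -> (\rank (hullE (Cmx n))).+1 = n.
Proof.
move=> Ho; have := mxrank_mul_ker (Cmx n) (Cmx n)^T.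
rewrite CCt rank_col0 rank_row0 F2_nat Ho rank_J ?rank_C; last by case: n Ho.
rewrite /hullE /dualE; lia.
Qed.

Lemma self_dual_C n : ~~ odd n -> self_dualE (Cmx n).
Proof.
move=> He; rewrite /self_dualE /dualE.
have sub : (Cmx n <= kermx (Cmx n)^T)%MS.
  rewrite sub_kermx CCt F2_nat (negbTE He).
  have -> : (const_mx 0 : 'M['F_2]_n) = 0 by apply/matrixP => i j; rewrite !mxE.
  by rewrite row_mx0 col_mx0.
case: (mxrank_leqif_eq sub) => _ <-.
by rewrite mxrank_ker mxrank_tr rank_C addnK.
Qed.

Theorem theorem11 :
  (forall n : nat, odd n -> (3 <= n)%N ->
     exists C : 'M['F_2]_(2 * n),
       is_code n (minn 4 n) C /\ almost_self_dualE C) /\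
  (forall n : nat, odd n -> (5 <= n)%N ->
     exists C : 'M['F_2]_(2 * n), is_code n 4 C /\ almost_self_dualE C) /\
  (forall n : nat, ~~ odd n -> (2 <= n)%N ->
     exists C : 'M['F_2]_(2 * n),
       is_code n (minn 4 n) C /\ self_dualE C) /\
  (forall n : nat, ~~ odd n -> (4 <= n)%N ->
     exists C : 'M['F_2]_(2 * n), is_code n 4 C /\ self_dualE C).
Proof.
have P1 : forall n : nat, odd n -> (3 <= n)%N ->
     exists C : 'M['F_2]_(2 * n),
       is_code n (minn 4 n) C /\ almost_self_dualE C.
  move=> n Ho H3; rewrite mul2n -addnn; exists (Cmx n); split.
    by apply: Cmx_code; lia.
  split; first by rewrite /almost_self_orthogonalE rank_C; exact: hull_rank.
  by rewrite rank_C addnn mul2n.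
have P3 : forall n : nat, ~~ odd n -> (2 <= n)%N ->
     exists C : 'M['F_2]_(2 * n),
       is_code n (minn 4 n) C /\ self_dualE C.
  move=> n He H2; rewrite mul2n -addnn; exists (Cmx n); split.
    exact: Cmx_code.
  exact: self_dual_C.
split; first exact: P1.
split.
  move=> n Ho H5; have := P1 n Ho (ltnW (ltnW H5)).
  by rewrite (_ : minn 4 n = 4%N) //; lia.
split; first exact: P3.
move=> n He H4; have := P3 n He (ltnW (ltnW H4)).
by rewrite (_ : minn 4 n = 4%N) //; lia.
Qed.
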